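(* Let $G$ be a finite group (written additively, not necessarily abelian) with $\#G=q$, let $f:G\to G$ with $v=\#\mathrm{Im}(f)$, and let $k$ be an integer with $1\le k\le q$. If \[ q\sum_{i=0}^{k}(-1)^i\binom{k}{i}\frac{\binom{v}{i}}{\binom{q}{i}}<1,\] then there exists a cover of $G$ associated with $f$ of cardinality $k$.
   Context: $\mathrm{Im}(f)=\{f(x):x\in G\}$. The subtraction table $M_f$ has rows indexed by $G$, columns indexed by $\mathrm{Im}(f)$, and entry $m_{r,c}=r-c$ at position $(r,c)$. A subset $S\subseteq G$ is a cover of $G$ associated with $f$ if every row of $M_f$ contains an entry lying in $S$, i.e. for every $r\in G$ there exists $c\in\mathrm{Im}(f)$ with $r-c\in S$. *)

(* Defs.v *)
From HB Require Import structures.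
From mathcomp Require Import all_boot all_order all_algebra all_fingroup.
Set Implicit Arguments. Unset Strict Implicit. Unset Printing Implicit Defensive.
Import GRing.Theory Num.Theory.

(* The finite group G is the whole finGroupType gT (written multiplicatively in
   MathComp); the paper's additive difference r - c is r * c^-1. *)

Definition imf (gT : finGroupType) (f : gT -> gT) : {set gT} :=
  [set f x | x in [set: gT]].

(* S is a cover of G associated with f: every row r of the subtraction table
   contains an entry r - c (= r * c^-1) lying in S, for some c in Im(f). *)
Definition is_cover (gT : finGroupType) (f : gT -> gT) (S : {set gT}) : Prop :=
  forall r : gT, exists2 c, c \in imf f & (r * c^-1)%g \in S.

(* Main.v *)
Require Import Defs.
From mathcomp Require Import all_boot all_order all_algebra all_fingroup.
Import GRing.Theory Num.Theory.
From mathcomp Require Import ring lra zify.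
Local Open Scope ring_scope.

Lemma alt_sum (v q k : nat) : (v <= q)%N ->
  \sum_(i < k.+1) (-1) ^+ i * ('C(v, i) * 'C(q - i, k - i))%:R
  = ('C(q - v, k))%:R :> rat.
Proof.
elim: v q k => [|v IH] q k hv.
  rewrite big_ord_recl big1 => [|i _]; last by rewrite bin0n mul0n mulr0.
  by rewrite expr0 mul1r bin0 mul1n !subn0 addr0.
case: q hv => [//|q] hv.
case: k => [|k].
  by rewrite big_ord_recl big_ord0 addr0 expr0 mul1r !bin0.
have H1 := IH q.+1 k.+1 (leqW hv).
have H2 := IH q k hv.
rewrite big_ord_recl in H1.
rewrite big_ord_recl.
have E (i : 'I_k.+1) :
  (-1) ^+ (lift ord0 i) * ('C(v.+1, lift ord0 i) * 'C(q.+1 - lift ord0 i, k.+1 - lift ord0 i))%:R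
  = (-1) ^+ (lift ord0 i) * ('C(v, lift ord0 i) * 'C(q.+1 - lift ord0 i, k.+1 - lift ord0 i))%:R
    - (-1) ^+ i * ('C(v, i) * 'C(q - i, k - i))%:R :> rat.
  rewrite lift0 !subSS binS mulnDl natrD mulrDr exprS mulN1r mulNr.
  by rewrite ?mulNr.
rewrite (eq_bigr _ (fun i _ => E i)) sumrB H2 addrA.
rewrite !bin0 in H1 *. rewrite H1 subSn // subSS binS natrD.
by rewrite addrK.
Qed.

Lemma bin_ratio (i k q : nat) : (i <= k)%N -> (k <= q)%N ->
  ('C(k, i))%:R / ('C(q, i))%:R = ('C(q - i, k - i))%:R / ('C(q, k))%:R :> rat.
Proof.
move=> hik hkq.
have hiq : (i <= q)%N by apply: leq_trans hkq.
apply/eqP; rewrite eqr_div ?pnatr_eq0 -?lt0n ?bin_gt0 //.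
rewrite -!natrM eqr_nat.
have P : (0 < i`! * (k - i)`! * (q - k)`!)%N by rewrite !muln_gt0 !fact_gt0.
rewrite -(eqn_pmul2r P).
have A1 := bin_fact hik.
have A2 := bin_fact hkq.
have A3 := bin_fact hiq.
have A4 : (k - i <= q - i)%N by apply: leq_sub2r.
have A5 := bin_fact A4.
have eq : ((q - i) - (k - i) = q - k)%N by rewrite subnBA // subnK.
rewrite eq in A5.
have e1 : ('C(k, i) * 'C(q, k) * (i`! * (k - i)`! * (q - k)`!) = q`!)%N.
  rewrite -A2 -A1; ring.
have e2 : ('C(q - i, k - i) * 'C(q, i) * (i`! * (k - i)`! * (q - k)`!) = q`!)%N.
  rewrite -A3 -A5; ring.
by rewrite e1 e2.
Qed.

Lemma count_bound (gT : finGroupType) (f : gT -> gT) (k : nat) :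
  (#|[set: gT]| * 'C(#|[set: gT]| - #|imf f|, k) < 'C(#|[set: gT]|, k))%N ->
  exists S : {set gT}, #|S| = k /\ is_cover f S.
Proof.
move=> H.
pose row (r : gT) := [set (r * c^-1)%g | c in imf f].
have crow : forall r, #|row r| = #|imf f|.
  move=> r; rewrite card_imset // => x y /mulgI; exact: invg_inj.
pose K := [set S : {set gT} | #|S| == k].
case: (boolP [exists S in K, [forall r, ~~ [disjoint S & row r]]]).
  case/existsP => S /andP [SK /forallP HS]; exists S; split; first by move: SK; rewrite inE => /eqP.
  move=> r; have := HS r; rewrite -setI_eq0 => /set0Pn [x /setIP [xS /imsetP [c cI Ex]]].
  by exists c => //; rewrite -Ex.
rewrite negb_exists => /forallP HK.
have HK' : forall S, S \in K -> exists r, [disjoint S & row r].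
  move=> S SK; have := HK S; rewrite SK /= negb_forall => /existsP [r].
  by rewrite negbK; exists r.
exfalso; move: H; apply/negP; rewrite -leqNgt.
pose q := #|[set: gT]|.
have -> : 'C(q, k) = #|K| by rewrite /q cardsT -card_draws.
have step1 : (#|K| <= \sum_(S in K) \sum_r ([disjoint S & row r] : nat))%N.
  rewrite -sum1_card; apply: leq_sum => S SK.
  case: (HK' S SK) => r Hr.
  by rewrite (bigD1 r) //= Hr.
apply: (leq_trans step1).
rewrite exchange_big /=.
have -> : \sum_r \sum_(S in K) ([disjoint S & row r] : nat)
   = \sum_(r : gT) 'C(q - #|imf f|, k).
  apply: eq_bigr => r _.
  rewrite -big_mkcondr /= sum1dep_card -(crow r).
  have -> : q = #|gT| by rewrite /q cardsT.
  have Ec := cardsCs (~: row r); rewrite setCK in Ec; rewrite -Ec -cards_draws.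
  apply: eq_card => S; rewrite !inE disjoints_subset.
  by rewrite andbC.
by rewrite sum_nat_const /q cardsT.
Qed.

Theorem theorem6p1 (gT : finGroupType) (f : gT -> gT) (k : nat) :
  (1 <= k)%N -> (k <= #|[set: gT]|)%N ->
  (#|[set: gT]|%:R
     * \sum_(i < k.+1) (-1) ^+ i * ('C(k, i))%:R
         * (('C(#|imf f|, i))%:R / ('C(#|[set: gT]|, i))%:R) < (1 : rat)) ->
  exists S : {set gT}, #|S| = k /\ is_cover f S.
Proof.
move=> hk1 hkq Hs; apply: count_bound.
set q := #|[set: gT]| in hkq Hs *.
set v := #|imf f| in Hs *.
have hv : (v <= q)%N by rewrite /v /q subset_leq_card // subsetT.
have Esum : \sum_(i < k.+1) (-1) ^+ i * ('C(k, i))%:R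
         * (('C(v, i))%:R / ('C(q, i))%:R) = ('C(q - v, k))%:R / ('C(q, k))%:R :> rat.
  rewrite -alt_sum // mulr_suml; apply: eq_bigr => i _.
  have hik : (i <= k)%N by rewrite -ltnS.
  transitivity ((-1) ^+ i * ('C(v, i))%:R * (('C(k, i))%:R / ('C(q, i))%:R) : rat).
    by ring.
  rewrite bin_ratio // natrM; ring.
rewrite Esum mulrA ltr_pdivrMr ?ltr0n ?bin_gt0 // mul1r -natrM ltr_nat in Hs.
exact: Hs.
Qed.
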